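(* Assume $\kappa=\Psi'(h)\neq0$. If $\kappa>0$ then $\sigma'(\tau)>0$ for every $\tau>0$ at which $\sigma$ is defined; if $\kappa<0$ then $\sigma'(\tau)<0$ for every such $\tau>0$.
   Context: Let $h>0$, $\omega\in C^{1,\alpha}(\mathbb R)$, and let $\Psi$ solve $\Psi''+\omega(\Psi)=0$ on $(0,h)$, $\Psi(h)=0$. Let $\mu_1<\mu_2<\cdots$ be the eigenvalues of $-w''-\omega'(\Psi)w=\mu w$ on $(0,h)$ with $w(0)=w(h)=0$. For $\tau\ge0$ with $\tau^2\neq-\mu_j$ for all $j$, $\gamma(y;\tau)$ is the solution of $-\gamma''-\omega'(\Psi(y))\gamma+\tau^2\gamma=0$ on $(0,h)$, $\gamma(0;\tau)=0$, $\gamma(h;\tau)=1$, and $\gamma'$ denotes the $y$-derivative. With $\kappa=\Psi'(h)$ and $\rho_0=\dfrac{1+\Psi'(h)\Psi''(h)}{\Psi'(h)^2}$, the dispersion function is $\sigma(\tau)=\kappa\big(\gamma'(h;\tau)-\rho_0\big)$, defined wherever $\gamma$ is. *)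

(* Defs.v *)
From Stdlib Require Import Reals ClassicalEpsilon.
From Coquelicot Require Import Coquelicot.
Open Scope R_scope.

Definition is_derive_on (a b : R) (f : R -> R) (x l : R) : Prop :=
  filterlim (fun y => (f y - f x) / (y - x))
    (within (fun y => a <= y <= b /\ y <> x) (locally x)) (locally l).

Definition twice_diff_on (a b : R) (f f1 f2 : R -> R) : Prop :=
  forall y, a <= y <= b -> is_derive_on a b f y (f1 y) /\ is_derive_on a b f1 y (f2 y).

Definition C1alpha (alpha : R) (w : R -> R) : Prop :=
  (forall x, ex_derive w x) /\ (forall x, continuous (Derive w) x) /\
  (forall a b, exists C, forall x y, a <= x <= b -> a <= y <= b ->
      Rabs (Derive w x - Derive w y) <= C * Rpower (Rabs (x - y)) alpha).

Definition dirichlet_eigenvalue (q : R -> R) (h mu : R) : Prop :=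
  exists w w1 w2 : R -> R,
    twice_diff_on 0 h w w1 w2 /\
    (forall y, 0 < y < h -> - w2 y - q y * w y = mu * w y) /\
    w 0 = 0 /\ w h = 0 /\ (exists y, 0 <= y <= h /\ w y <> 0).

Definition gamma_solution (q : R -> R) (h tau : R) (g g1 g2 : R -> R) : Prop :=
  twice_diff_on 0 h g g1 g2 /\
  (forall y, 0 < y < h -> - g2 y - q y * g y + tau ^ 2 * g y = 0) /\
  g 0 = 0 /\ g h = 1.

(* gamma'(h; tau): the y-derivative at y = h of the (unique, when -tau^2
   is not an eigenvalue) solution gamma(.; tau). *)
Definition gamma_deriv_h (q : R -> R) (h tau : R) : R :=
  epsilon (inhabits 0)
    (fun d => exists g g1 g2, gamma_solution q h tau g g1 g2 /\ g1 h = d).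

Definition dispersion_sigma (q : R -> R) (h kappa rho0 tau : R) : R :=
  kappa * (gamma_deriv_h q h tau - rho0).

(* Main.v *)
Require Import Defs.
From Stdlib Require Import Reals.
From Coquelicot Require Import Coquelicot.
From Stdlib Require Import Lra Psatz Factorial ClassicalEpsilon.
Open Scope R_scope.

Lemma derive_on_unfold a b f x l :
  is_derive_on a b f x l ->
  forall eps, 0 < eps -> exists d, 0 < d /\ forall y, a <= y <= b -> y <> x ->
    Rabs (y - x) < d -> Rabs ((f y - f x)/(y - x) - l) < eps.
Proof.
  intros H eps Heps.
  destruct (H (fun z => Rabs (z - l) < eps)) as [d Hd].
  { exists (mkposreal eps Heps). intros z Hz. exact Hz. }
  exists d. split. apply cond_pos. intros y Hy Hyx Hd'.
  apply (Hd y). exact Hd'. split; assumption.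
Qed.

Lemma derive_on_interior a b f x l : a < x < b ->
  is_derive_on a b f x l -> is_derive f x l.
Proof.
  intros Hx H. apply is_derive_Reals. intros eps Heps.
  destruct (derive_on_unfold a b f x l H eps Heps) as [d [Hd H1]].
  assert (Hm : 0 < Rmin d (Rmin (x - a) (b - x))).
  { repeat apply Rmin_pos; lra. }
  exists (mkposreal _ Hm). intros h Hh0 Hh. simpl in Hh.
  assert (E1 := Rmin_l d (Rmin (x - a) (b - x))).
  assert (E2 := Rmin_r d (Rmin (x - a) (b - x))).
  assert (E3 := Rmin_l (x - a) (b - x)).
  assert (E4 := Rmin_r (x - a) (b - x)).
  destruct (Rabs_def2 _ _ Hh) as [Ha Hb].
  specialize (H1 (x + h)).
  replace (x + h - x) with h in H1 by ring.
  apply H1.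
  - split; lra.
  - intro E. apply Hh0. lra.
  - lra.
Qed.

Lemma derive_to_on a b f x l : is_derive f x l -> is_derive_on a b f x l.
Proof.
  intros H. apply is_derive_Reals in H.
  intros P [e He].
  destruct (H e (cond_pos e)) as [d Hd].
  exists d. intros y Hy [Hy1 Hy2].
  apply He. simpl in *. specialize (Hd (y - x)).
  replace (x + (y - x)) with y in Hd by ring.
  unfold ball; simpl; unfold AbsRing_ball, abs, minus, plus, opp; simpl.
  apply Hd. lra. exact Hy.
Qed.

Lemma derive_on_lip a b f x l : is_derive_on a b f x l ->
  exists d, 0 < d /\ forall y, a <= y <= b -> Rabs (y - x) < d ->
    Rabs (f y - f x) <= (Rabs l + 1) * Rabs (y - x).
Proof.
  intros H. destruct (derive_on_unfold a b f x l H 1 Rlt_0_1) as [d [Hd H1]].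
  exists d. split; auto. intros y Hy Hyd.
  destruct (Req_dec y x) as [E|E].
  - subst. replace (x - x) with 0 by ring. rewrite Rminus_eq_0, Rabs_R0. lra.
  - specialize (H1 y Hy E Hyd).
    assert (Hne : y - x <> 0) by lra.
    replace (f y - f x) with (((f y - f x) / (y - x) - l) * (y - x) + l * (y - x))
      by (field; exact Hne).
    eapply Rle_trans. apply Rabs_triang. rewrite !Rabs_mult.
    assert (0 <= Rabs (y - x)) by apply Rabs_pos. nra.
Qed.

Definition clamp (h x : R) := Rmax 0 (Rmin h x).

Lemma clamp_in h x : 0 <= h -> 0 <= clamp h x <= h.
Proof. intros. unfold clamp, Rmax, Rmin. repeat destruct Rle_dec; lra. Qed.
Lemma clamp_id h x : 0 <= x <= h -> clamp h x = x.
Proof. intros. unfold clamp, Rmax, Rmin. repeat destruct Rle_dec; lra. Qed.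
Lemma clamp_lip h x y : 0 <= h -> Rabs (clamp h y - clamp h x) <= Rabs (y - x).
Proof.
  intros. unfold clamp, Rmax, Rmin. repeat destruct Rle_dec;
  unfold Rabs; repeat destruct Rcase_abs; lra.
Qed.

Definition Dh (h : R) := fun y : R => 0 <= y <= h.

Definition cont_in (h : R) (f : R -> R) :=
  forall x, 0 <= x <= h -> filterlim f (within (Dh h) (locally x)) (locally (f x)).

Lemma cont_in_of_eps h f :
  (forall x, 0 <= x <= h -> forall eps, 0 < eps -> exists d, 0 < d /\
     forall y, 0 <= y <= h -> Rabs (y - x) < d -> Rabs (f y - f x) < eps) ->
  cont_in h f.
Proof.
  intros H x Hx P [e He].
  destruct (H x Hx e (cond_pos e)) as [d [Hd H1]].
  exists (mkposreal d Hd). intros y Hy Hy2. apply He. apply H1. exact Hy2. exact Hy.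
Qed.

Lemma cont_in_derive_on h f f1 :
  (forall x, 0 <= x <= h -> is_derive_on 0 h f x (f1 x)) -> cont_in h f.
Proof.
  intros H. apply cont_in_of_eps. intros x Hx eps Heps.
  destruct (derive_on_lip _ _ _ _ _ (H x Hx)) as [d [Hd H1]].
  assert (Hk : 0 < Rabs (f1 x) + 1) by (generalize (Rabs_pos (f1 x)); lra).
  exists (Rmin d (eps / (Rabs (f1 x) + 1))). split.
  { apply Rmin_pos; [lra| apply Rdiv_lt_0_compat; lra]. }
  intros y Hy Hyd.
  assert (Hm1 := Rmin_l d (eps / (Rabs (f1 x) + 1))).
  assert (Hm2 := Rmin_r d (eps / (Rabs (f1 x) + 1))).
  eapply Rle_lt_trans. apply H1. exact Hy. lra.
  apply Rlt_le_trans with ((Rabs (f1 x) + 1) * (eps / (Rabs (f1 x) + 1))).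
  apply Rmult_lt_compat_l. lra. lra.
  right. field. lra.
Qed.

Lemma cont_in_global h f : (forall x, continuous f x) -> cont_in h f.
Proof.
  intros H x Hx. eapply filterlim_filter_le_1. 2: apply H.
  intros P HP. unfold within. eapply filter_imp. 2: exact HP. auto.
Qed.

Lemma cont_in_mult h f g : cont_in h f -> cont_in h g -> cont_in h (fun x => f x * g x).
Proof.
  intros Hf Hg x Hx.
  apply (filterlim_comp_2 f g Rmult (Hf x Hx) (Hg x Hx)).
  apply (filterlim_mult (K := R_AbsRing)).
Qed.

Lemma cont_in_plus h f g : cont_in h f -> cont_in h g -> cont_in h (fun x => f x + g x).
Proof.
  intros Hf Hg x Hx.
  apply (filterlim_comp_2 f g Rplus (Hf x Hx) (Hg x Hx)).
  apply (filterlim_plus (V := R_NormedModule)).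
Qed.

Lemma cont_in_opp h f : cont_in h f -> cont_in h (fun x => - f x).
Proof.
  intros Hf x Hx. apply (filterlim_comp _ _ _ f Ropp _ _ _ (Hf x Hx)).
  apply (filterlim_opp (V := R_NormedModule)).
Qed.

Lemma cont_in_clamp h f : 0 <= h -> cont_in h f -> forall x, continuous (fun y => f (clamp h y)) x.
Proof.
  intros Hh Hf x.
  apply (filterlim_comp _ _ _ (clamp h) f (locally x) (within (Dh h) (locally (clamp h x)))).
  - intros P [e He]. exists e. intros y Hy. apply He.
    + unfold ball in *; simpl in *; unfold AbsRing_ball, abs, minus, plus, opp in *; simpl in *.
      eapply Rle_lt_trans. apply clamp_lip. exact Hh. exact Hy.
    + apply clamp_in; exact Hh.
  - apply Hf. apply clamp_in; exact Hh.
Qed.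

Lemma deriv_RInt_cont (g : R -> R) x :
  (forall z, continuous g z) -> is_derive (fun y => RInt g 0 y) x (g x).
Proof.
  intros Hg. apply is_derive_RInt with (a := 0).
  - apply filter_forall. intros b. apply RInt_correct.
    apply ex_RInt_continuous. intros; apply Hg.
  - apply Hg.
Qed.

Lemma cont_abs (g : R -> R) : (forall z, continuous g z) -> forall z, continuous (fun s => Rabs (g s)) z.
Proof.
  intros Hg z. apply continuous_comp. apply Hg.
  apply continuous_Rabs.
Qed.

Lemma exR (f : R -> R) a b : (forall z, continuous f z) -> ex_RInt f a b.
Proof. intros H. apply (ex_RInt_continuous (V := R_CompleteNormedModule)). intros; apply H. Qed.

Lemma cmult (f g : R -> R) x : continuous f x -> continuous g x -> continuous (fun s => f s * g s) x.
Proof. intros. apply (continuous_mult (K := R_AbsRing) f g); assumption. Qed.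

Lemma dcont (f : R -> R) x l : is_derive f x l -> continuous f x.
Proof. intros H. apply (ex_derive_continuous (K := R_AbsRing) (V := R_NormedModule)). exists l; exact H. Qed.

Lemma int_pow_bound (g : R -> R) (C : R) (n : nat) (y : R) :
  (forall z, continuous g z) ->
  (forall s, Rmin 0 y <= s <= Rmax 0 y -> Rabs (g s) <= C * Rabs s ^ n) ->
  Rabs (RInt g 0 y) <= C * Rabs y ^ S n / INR (S n).
Proof.
  intros Hg Hb.
  assert (HS : 0 < INR (S n)) by (apply lt_0_INR; lia).
  destruct (Rle_dec 0 y) as [Hy|Hy].
  - eapply Rle_trans. apply abs_RInt_le. exact Hy.
    apply exR; apply Hg.
    assert (E : is_RInt (fun s => C * s ^ n) 0 y (C * y ^ S n / INR (S n))).
    { replace (C * y ^ S n / INR (S n)) with (minus (C * y ^ S n / INR (S n)) (C * 0 ^ S n / INR (S n))).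
      apply (is_RInt_derive (fun s => C * s ^ S n / INR (S n))).
      - intros x _. auto_derive. auto. change (match n with 0%nat => 1 | S _ => INR n + 1 end) with (INR (S n)). field. lra.
      - intros x _. apply (ex_derive_continuous (fun s => C * s ^ n)). auto_derive. auto.
      - rewrite pow_i by lia. set (k := INR (S n)). set (t := y ^ S n). unfold minus, plus, opp; simpl. unfold Rdiv. ring. }
    rewrite Rabs_pos_eq with (x := y) by exact Hy.
    rewrite <- (is_RInt_unique _ _ _ _ E).
    apply RInt_le. exact Hy.
    apply exR; apply cont_abs; apply Hg.
    eexists; exact E.
    intros x Hx. rewrite <- (Rabs_pos_eq x) at 2 by lra. apply Hb.
    rewrite Rmin_left, Rmax_right by lra. lra.
  - assert (Hy' : y <= 0) by lra.
    rewrite <- (opp_RInt_swap g) by (apply exR; apply Hg).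
    change (Rabs (opp (RInt g y 0)) <= C * Rabs y ^ S n / INR (S n)). change (Rabs (- RInt g y 0) <= C * Rabs y ^ S n / INR (S n)). rewrite Rabs_Ropp.
    eapply Rle_trans. apply abs_RInt_le. exact Hy'.
    apply exR; apply Hg.
    assert (E : is_RInt (fun s => C * (- s) ^ n) y 0 (C * (-y) ^ S n / INR (S n))).
    { replace (C * (-y) ^ S n / INR (S n)) with (minus (- C * (- 0) ^ S n / INR (S n)) (- C * (-y) ^ S n / INR (S n))).
      apply (is_RInt_derive (fun s => - C * (- s) ^ S n / INR (S n))).
      - intros x _. auto_derive. auto. change (match n with 0%nat => 1 | S _ => INR n + 1 end) with (INR (S n)). field. lra.
      - intros x _. apply (ex_derive_continuous (fun s => C * (- s) ^ n)). auto_derive. auto.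
      - rewrite Ropp_0, pow_i by lia. set (k := INR (S n)). set (t := (-y) ^ S n). unfold minus, plus, opp; simpl. unfold Rdiv. ring. }
    rewrite Rabs_left with (r := y) by lra.
    rewrite <- (is_RInt_unique _ _ _ _ E).
    apply RInt_le. exact Hy'.
    apply exR; apply cont_abs; apply Hg.
    eexists; exact E.
    intros x Hx. destruct (Req_dec x 0) as [->|Hx0].
    + lra.
    + rewrite <- (Rabs_left x) by lra. apply Hb.
      rewrite Rmin_right, Rmax_left by lra. lra.
Qed.

Fixpoint bk (p : R -> R) (k : nat) : R -> R :=
  match k with
  | O => fun _ => 1
  | S k => fun y => RInt (fun s => p s * RInt (bk p k) 0 s) 0 y
  end.
Definition ak (p : R -> R) (k : nat) (y : R) := RInt (bk p k) 0 y.

Section Ser.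
Variable p : R -> R.
Variable M : R.
Hypothesis Hp : forall x, continuous p x.
Hypothesis HM0 : 0 <= M.
Hypothesis HM : forall x, Rabs (p x) <= M.

Lemma ab_props k :
  (forall x, continuous (bk p k) x) /\ (forall x, is_derive (ak p k) x (bk p k x)) /\
  (forall x, is_derive (bk p (S k)) x (p x * ak p k x)).
Proof.
  induction k as [|k IH].
  - assert (H0 : forall x, continuous (bk p 0) x) by (intros; apply continuous_const).
    assert (H1 : forall x, is_derive (ak p 0) x (bk p 0 x)) by (intros; apply deriv_RInt_cont; exact H0).
    split; [exact H0| split; [exact H1|]].
    intros x. apply (deriv_RInt_cont (fun s => p s * ak p 0 s)).
    intros z. apply cmult. apply Hp. eapply dcont; apply H1.
  - destruct IH as [_ [Ha Hb]].
    assert (H0 : forall x, continuous (bk p (S k)) x) by (intros; eapply dcont; apply Hb).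
    assert (H1 : forall x, is_derive (ak p (S k)) x (bk p (S k) x)) by (intros; apply deriv_RInt_cont; exact H0).
    split; [exact H0| split; [exact H1|]].
    intros x. apply (deriv_RInt_cont (fun s => p s * ak p (S k) s)).
    intros z. apply cmult. apply Hp. eapply dcont; apply H1.
Qed.

Lemma ab_bound k : forall y,
  Rabs (bk p k y) <= M ^ k * Rabs y ^ (2 * k) / INR (fact k) /\
  Rabs (ak p k y) <= M ^ k * Rabs y ^ (S (2 * k)) / INR (fact k).
Proof.
  assert (Hf : forall k, 0 < INR (fact k)) by (intros; apply lt_0_INR, lt_O_fact).
  revert k. assert (Ha : forall k, (forall y, Rabs (bk p k y) <= M ^ k * Rabs y ^ (2 * k) / INR (fact k)) ->
     forall y, Rabs (ak p k y) <= M ^ k * Rabs y ^ (S (2 * k)) / INR (fact k)).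
  { intros k Hb y. unfold ak.
    eapply Rle_trans. apply (int_pow_bound _ (M ^ k / INR (fact k)) (2 * k)).
    apply (proj1 (ab_props k)). intros s _. specialize (Hb s).
    apply Rle_trans with (1 := Hb). right. unfold Rdiv. ring.
    assert (0 <= M ^ k / INR (fact k) * Rabs y ^ S (2 * k)).
    { apply Rmult_le_pos. apply Rmult_le_pos. apply pow_le; lra. left; apply Rinv_0_lt_compat, Hf.
      apply pow_le, Rabs_pos. }
    assert (1 <= INR (S (2 * k))) by (apply (le_INR 1); lia).
    apply Rle_trans with (M ^ k / INR (fact k) * Rabs y ^ S (2 * k) / 1).
    unfold Rdiv. apply Rmult_le_compat_l. exact H. apply Rinv_le_contravar; lra.
    right. field. apply Rgt_not_eq, Hf. }
  intros k. induction k as [|k IH]; intros y.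
  - assert (Hb : forall y, Rabs (bk p 0 y) <= M ^ 0 * Rabs y ^ (2 * 0) / INR (fact 0)).
    { intros z. simpl. rewrite Rabs_R1. lra. }
    split. apply Hb. apply Ha. exact Hb.
  - assert (Hb : forall y, Rabs (bk p (S k) y) <= M ^ S k * Rabs y ^ (2 * S k) / INR (fact (S k))).
    { intros z. change (bk p (S k) z) with (RInt (fun s => p s * ak p k s) 0 z).
      eapply Rle_trans. apply (int_pow_bound _ (M ^ S k / INR (fact k)) (S (2 * k))).
      intros; apply cmult. apply Hp. eapply dcont; apply (proj1 (proj2 (ab_props k))).
      intros s _. rewrite Rabs_mult. destruct (IH s) as [_ Has].
      apply Rle_trans with (M * (M ^ k * Rabs s ^ S (2 * k) / INR (fact k))).
      apply Rmult_le_compat. apply Rabs_pos. apply Rabs_pos. apply HM. exact Has.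
      right. simpl. field. apply Rgt_not_eq, Hf.
      replace (2 * S k)%nat with (S (S (2 * k))) by lia.
      rewrite fact_simpl, mult_INR.
      assert (HSk : INR (S k) <= INR (S (S (2 * k)))) by (apply le_INR; lia).
      assert (0 < INR (S k)) by (apply lt_0_INR; lia).
      assert (0 <= M ^ S k * Rabs z ^ S (S (2 * k))).
      { apply Rmult_le_pos. apply pow_le; lra. apply pow_le, Rabs_pos. }
      specialize (Hf k).
      unfold Rdiv. rewrite Rinv_mult.
      replace (M ^ S k * / INR (fact k) * Rabs z ^ S (S (2 * k)) * / INR (S (S (2 * k))))
        with ((M ^ S k * Rabs z ^ S (S (2 * k))) * / INR (fact k) * / INR (S (S (2 * k)))) by ring.
      replace (M ^ S k * Rabs z ^ S (S (2 * k)) * (/ INR (S k) * / INR (fact k)))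
        with ((M ^ S k * Rabs z ^ S (S (2 * k))) * / INR (fact k) * / INR (S k)) by ring.
      apply Rmult_le_compat_l. apply Rmult_le_pos. exact H0. left; apply Rinv_0_lt_compat; exact Hf.
      apply Rinv_le_contravar; lra. }
    split. apply Hb. apply Ha. exact Hb.
Qed.

End Ser.

Lemma is_series_Un_cv a l : is_series a l -> Un_cv (fun n => sum_f_R0 a n) l.
Proof. intros H. apply is_series_Reals in H. exact H. Qed.

Lemma exp_series X c : ex_series (fun k => c * (X ^ k / INR (fact k))).
Proof.
  destruct (exist_exp X) as [l Hl].
  assert (H : ex_series (fun i => / INR (fact i) * X ^ i)).
  { exists l. apply is_series_Reals. exact Hl. }
  apply (ex_series_scal_l (V := R_NormedModule) c) in H.
  eapply ex_series_ext. 2: exact H. intros n. unfold scal; simpl. unfold mult; simpl. unfold Rdiv. ring.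
Qed.

Section Ser2.
Variable p : R -> R.
Variable M : R.
Hypothesis Hp : forall x, continuous p x.
Hypothesis HM0 : 0 <= M.
Hypothesis HM : forall x, Rabs (p x) <= M.

Lemma ab_ball r k y : Rabs y <= r ->
  Rabs (bk p k y) <= (M * r ^ 2) ^ k / INR (fact k) /\
  Rabs (ak p k y) <= r * ((M * r ^ 2) ^ k / INR (fact k)).
Proof.
  intros Hy. destruct (ab_bound p M Hp HM0 HM k y) as [H1 H2].
  assert (Hf : 0 < INR (fact k)) by (apply lt_0_INR, lt_O_fact).
  assert (H0 : 0 <= Rabs y) by apply Rabs_pos.
  assert (Hp2 : Rabs y ^ (2 * k) <= r ^ (2 * k)) by (apply pow_incr; lra).
  assert (Hq : 0 <= Rabs y ^ (2 * k)) by (apply pow_le; lra).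
  assert (Mk : 0 <= M ^ k) by (apply pow_le; lra).
  assert (E : (M * r ^ 2) ^ k = M ^ k * r ^ (2 * k)) by (rewrite Rpow_mult_distr, pow_mult; reflexivity).
  rewrite E. split.
  - eapply Rle_trans. exact H1. unfold Rdiv. apply Rmult_le_compat_r.
    left; apply Rinv_0_lt_compat; exact Hf. apply Rmult_le_compat_l; lra.
  - eapply Rle_trans. exact H2. rewrite <- (tech_pow_Rmult (Rabs y)).
    replace (M ^ k * (Rabs y * Rabs y ^ (2 * k)) / INR (fact k)) with
      (Rabs y * (M ^ k * Rabs y ^ (2 * k) / INR (fact k))) by (field; lra).
    apply Rmult_le_compat. lra.
    apply Rmult_le_pos. apply Rmult_le_pos; lra. left; apply Rinv_0_lt_compat; exact Hf.
    exact Hy. unfold Rdiv. apply Rmult_le_compat_r.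
    left; apply Rinv_0_lt_compat; exact Hf. apply Rmult_le_compat_l; lra.
Qed.

Lemma cv_of (f : nat -> R -> R) (B : R -> nat -> R) :
  (forall x, ex_series (B x)) -> (forall x k, Rabs (f k x) <= B x k) ->
  forall x, {l : R | Un_cv (fun N => SP f N x) l}.
Proof.
  intros HB Hb x. apply constructive_indefinite_description.
  assert (H : ex_series (fun k => f k x)).
  { apply (ex_series_le (V := R_CompleteNormedModule) _ (B x)). intros n. apply Hb. apply HB. }
  exists (Series (fun k => f k x)). apply is_series_Un_cv. apply Series_correct. exact H.
Qed.

Definition cva : forall x, {l : R | Un_cv (fun N => SP (ak p) N x) l}.
Proof.
  apply (cv_of _ (fun x k => Rabs x * ((M * Rabs x ^ 2) ^ k / INR (fact k)))).
  intros x. apply exp_series. intros x k. apply (ab_ball (Rabs x)). lra.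
Defined.

Definition cvb : forall x, {l : R | Un_cv (fun N => SP (bk p) N x) l}.
Proof.
  apply (cv_of _ (fun x k => 1 * ((M * Rabs x ^ 2) ^ k / INR (fact k)))).
  intros x. apply exp_series. intros x k. rewrite Rmult_1_l. apply (ab_ball (Rabs x)). lra.
Defined.

Lemma CVN_of (f : nat -> R -> R) (c : R) (r : posreal) : 0 <= c ->
  (forall k y, Rabs y <= r -> Rabs (f k y) <= c * ((M * r ^ 2) ^ k / INR (fact k))) ->
  CVN_r f r.
Proof.
  intros Hc Hb.
  exists (fun k => c * ((M * r ^ 2) ^ k / INR (fact k))).
  apply constructive_indefinite_description.
  destruct (exp_series (M * r ^ 2) c) as [l Hl].
  exists l. split.
  - apply is_series_Un_cv. eapply is_series_ext. 2: exact Hl. intros n.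
    rewrite Rabs_pos_eq. reflexivity. apply Rmult_le_pos. exact Hc.
    apply Rmult_le_pos. apply pow_le. apply Rmult_le_pos. exact HM0. apply pow2_ge_0.
    left; apply Rinv_0_lt_compat, lt_0_INR, lt_O_fact.
  - intros n y Hy. apply Hb. unfold Boule in Hy. rewrite Rminus_0_r in Hy. lra.
Qed.

Definition Usol := SFL (ak p) cva.
Definition Vsol := SFL (bk p) cvb.

Lemma CVU_a (r : posreal) : CVU (fun n => SP (ak p) n) Usol 0 r.
Proof.
  apply CVN_CVU. apply (CVN_of _ r). apply Rlt_le, cond_pos.
  intros k y Hy. apply ab_ball. exact Hy.
Qed.

Lemma CVU_b (r : posreal) : CVU (fun n => SP (bk p) n) Vsol 0 r.
Proof.
  apply CVN_CVU. apply (CVN_of _ 1). lra.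
  intros k y Hy. rewrite Rmult_1_l. apply ab_ball. exact Hy.
Qed.

Lemma U_cv x : Un_cv (fun N => SP (ak p) N x) (Usol x).
Proof. unfold Usol, SFL. destruct (cva x) as [l Hl]. exact Hl. Qed.
Lemma V_cv x : Un_cv (fun N => SP (bk p) N x) (Vsol x).
Proof. unfold Vsol, SFL. destruct (cvb x) as [l Hl]. exact Hl. Qed.

Lemma SPa_deriv n x : derivable_pt_lim (SP (ak p) n) x (SP (bk p) n x).
Proof.
  induction n as [|n IH].
  - simpl. unfold SP; simpl. apply is_derive_Reals. apply (ab_props p Hp 0).
  - unfold SP in *; simpl.
    apply (derivable_pt_lim_plus (fun y => sum_f_R0 (fun k => ak p k y) n) (ak p (S n))).
    exact IH. apply is_derive_Reals. apply (ab_props p Hp (S n)).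
Qed.

Lemma SPb_deriv n x : derivable_pt_lim (SP (bk p) (S n)) x (p x * SP (ak p) n x).
Proof.
  induction n as [|n IH].
  - unfold SP; simpl.
    replace (p x * ak p 0 x) with (0 + p x * ak p 0 x) by ring.
    apply (derivable_pt_lim_plus (fun y => 1) (bk p 1)).
    apply derivable_pt_lim_const. apply is_derive_Reals. apply (ab_props p Hp 0).
  - unfold SP in *. change (sum_f_R0 (fun k => bk p k x) (S (S n))) with
      (sum_f_R0 (fun k => bk p k x) (S n) + bk p (S (S n)) x).
    replace (p x * sum_f_R0 (fun k => ak p k x) (S n)) with
      (p x * sum_f_R0 (fun k => ak p k x) n + p x * ak p (S n) x) by (simpl; ring).
    apply (derivable_pt_lim_plus (fun y => sum_f_R0 (fun k => bk p k y) (S n)) (bk p (S (S n)))).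
    exact IH. apply is_derive_Reals. apply (ab_props p Hp (S n)).
Qed.

Lemma U_deriv x : is_derive Usol x (Vsol x).
Proof.
  apply is_derive_Reals.
  assert (Hr : 0 < Rabs x + 1) by (generalize (Rabs_pos x); lra).
  set (r := mkposreal _ Hr).
  apply (CVU_derivable (fun n => SP (ak p) n) (fun n => SP (bk p) n) Usol Vsol 0 r).
  apply CVU_b. intros; apply U_cv. intros; apply SPa_deriv.
  unfold Boule; simpl. rewrite Rminus_0_r. lra.
Qed.

Lemma V_deriv x : is_derive Vsol x (p x * Usol x).
Proof.
  apply is_derive_Reals.
  assert (Hr : 0 < Rabs x + 1) by (generalize (Rabs_pos x); lra).
  set (r := mkposreal _ Hr).
  apply (CVU_derivable (fun n => SP (bk p) (S n)) (fun n y => p y * SP (ak p) n y) Vsol (fun y => p y * Usol y) 0 r).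
  - intros eps Heps.
    destruct (CVU_a r (eps / (M + 1))) as [N HN].
    apply Rdiv_lt_0_compat; lra.
    exists N. intros n y Hn Hy. specialize (HN n y Hn Hy).
    replace (p y * Usol y - p y * SP (ak p) n y) with (p y * (Usol y - SP (ak p) n y)) by ring.
    rewrite Rabs_mult.
    apply Rle_lt_trans with (M * (eps / (M + 1))).
    apply Rmult_le_compat. apply Rabs_pos. apply Rabs_pos. apply HM. lra.
    apply Rlt_le_trans with ((M + 1) * (eps / (M + 1))).
    apply Rmult_lt_compat_r. apply Rdiv_lt_0_compat; lra. lra.
    right. field. lra.
  - intros y _. intros eps Heps. destruct (V_cv y eps Heps) as [N HN].
    exists N. intros n Hn. apply HN. lia.
  - intros; apply SPb_deriv.
  - unfold Boule; simpl. rewrite Rminus_0_r. lra.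
Qed.

Lemma Un_cv_const_ext (u : nat -> R) c : (forall n, u n = c) -> Un_cv u c.
Proof. intros H eps Heps. exists O. intros n _. rewrite H. unfold R_dist. rewrite Rminus_eq_0, Rabs_R0. lra. Qed.

Lemma U_0 : Usol 0 = 0.
Proof.
  apply (UL_sequence (fun N => SP (ak p) N 0)). apply U_cv.
  apply Un_cv_const_ext. intros n. induction n as [|n IH]; unfold SP in *; simpl.
  - unfold ak. apply (RInt_point (V := R_CompleteNormedModule)).
  - rewrite IH. unfold ak. rewrite (RInt_point (V := R_CompleteNormedModule)). apply Rplus_0_l.
Qed.

Lemma V_0 : Vsol 0 = 1.
Proof.
  apply (UL_sequence (fun N => SP (bk p) N 0)). apply V_cv.
  apply Un_cv_const_ext. intros n. induction n as [|n IH]; unfold SP in *; simpl.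
  - reflexivity.
  - rewrite IH. rewrite (RInt_point (V := R_CompleteNormedModule)). apply Rplus_0_r.
Qed.

End Ser2.

Theorem ode_exists (p : R -> R) (M : R) :
  (forall x, continuous p x) -> 0 <= M -> (forall x, Rabs (p x) <= M) ->
  exists U V : R -> R, (forall x, is_derive U x (V x)) /\ (forall x, is_derive V x (p x * U x)) /\
    U 0 = 0 /\ V 0 = 1.
Proof.
  intros Hp HM0 HM. exists (Usol p M Hp HM0 HM), (Vsol p M Hp HM0 HM).
  split; [|split; [|split]].
  apply U_deriv. apply V_deriv. apply U_0. apply V_0.
Qed.

Lemma gronwall (E dE : R -> R) (c F2 y : R) :
  0 <= c -> 0 <= F2 -> 0 <= y ->
  (forall t, 0 <= t <= y -> is_derive E t (dE t)) ->
  (forall t, 0 <= t <= y -> dE t <= c * E t + F2) ->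
  E y <= (E 0 + F2 * y) * exp (c * y).
Proof.
  intros Hc HF Hy Hd Hb.
  set (G := fun t => E t * exp (- c * t) - F2 * t).
  set (dG := fun t => dE t * exp (- c * t) + E t * (- c * exp (- c * t)) - F2).
  assert (HG : forall t, 0 <= t <= y -> is_derive G t (dG t)).
  { intros t Ht. unfold G, dG.
    apply (is_derive_minus (fun t => E t * exp (- c * t)) (fun t => F2 * t)).
    apply (is_derive_mult E (fun t => exp (- c * t))). apply Hd; exact Ht.
    auto_derive. auto. ring. intros; apply Rmult_comm.
    auto_derive. auto. ring. }
  destruct (MVT_gen G 0 y dG) as [z [Hz HGz]].
  - intros x Hx. rewrite Rmin_left, Rmax_right in Hx by lra. apply HG. lra.
  - intros x Hx. rewrite Rmin_left, Rmax_right in Hx by lra.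
    apply continuity_pt_filterlim. eapply dcont. apply HG. exact Hx.
  - rewrite Rmin_left, Rmax_right in Hz by lra.
    assert (HdG : dG z <= 0).
    { unfold dG. specialize (Hb z Hz).
      assert (He : 0 < exp (- c * z)) by apply exp_pos.
      assert (He1 : exp (- c * z) <= 1).
      { rewrite <- exp_0. destruct (Req_dec (c * z) 0) as [E0|E0].
        replace (- c * z) with 0 by lra. lra.
        left. apply exp_increasing. assert (0 <= c * z) by nra. lra. }
      replace (dE z * exp (- c * z) + E z * (- c * exp (- c * z)) - F2) with
        ((dE z - c * E z) * exp (- c * z) - F2) by ring.
      apply Rle_trans with (F2 * exp (- c * z) - F2).
      apply Rplus_le_compat_r. apply Rmult_le_compat_r. lra. lra. nra. }
    assert (HGy : G y <= G 0) by nra.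
    unfold G in HGy. replace (- c * 0) with 0 in HGy by ring. rewrite exp_0 in HGy.
    assert (Hpos : 0 < exp (c * y)) by apply exp_pos.
    assert (Hinv : exp (- c * y) * exp (c * y) = 1).
    { rewrite <- exp_plus. replace (- c * y + c * y) with 0 by ring. apply exp_0. }
    replace (E y) with (E y * exp (- c * y) * exp (c * y)) by (rewrite Rmult_assoc, Hinv; ring).
    apply Rmult_le_compat_r. lra. lra.
Qed.

Lemma energy (d e p0 f : R -> R) (M0 F2 y : R) :
  0 <= M0 -> 0 <= F2 -> 0 <= y ->
  (forall t, 0 <= t <= y -> is_derive d t (e t)) ->
  (forall t, 0 <= t <= y -> is_derive e t (p0 t * d t + f t)) ->
  (forall t, 0 <= t <= y -> Rabs (p0 t) <= M0) ->
  (forall t, 0 <= t <= y -> f t ^ 2 <= F2) ->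
  d y ^ 2 + e y ^ 2 <= (d 0 ^ 2 + e 0 ^ 2 + F2 * y) * exp ((2 + M0) * y).
Proof.
  intros HM HF Hy Hd He Hp Hf.
  apply (gronwall (fun t => d t ^ 2 + e t ^ 2)
          (fun t => 2 * d t * e t + 2 * e t * (p0 t * d t + f t))).
  lra. exact HF. exact Hy.
  - intros t Ht. apply (is_derive_plus (fun t => d t ^ 2) (fun t => e t ^ 2)).
    + eapply is_derive_ext. intros; simpl; reflexivity.
      replace (2 * d t * e t) with (INR 2 * e t * d t ^ 1) by (simpl; ring).
      apply (is_derive_pow d 2 t (e t)). apply Hd; exact Ht.
    + replace (2 * e t * (p0 t * d t + f t)) with (INR 2 * (p0 t * d t + f t) * e t ^ 1) by (simpl; ring).
      apply (is_derive_pow e 2 t). apply He; exact Ht.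
  - intros t Ht. specialize (Hp t Ht). specialize (Hf t Ht).
    set (a := d t) in *. set (b := e t) in *. set (q := p0 t) in *. set (g := f t) in *.
    assert (H1 : 2 * a * b <= a ^ 2 + b ^ 2) by (generalize (pow2_ge_0 (a - b)); nra).
    assert (H2 : 2 * b * g <= b ^ 2 + g ^ 2) by (generalize (pow2_ge_0 (b - g)); nra).
    assert (H3 : 2 * b * q * a <= M0 * (a ^ 2 + b ^ 2)).
    { apply Rle_trans with (Rabs q * (a ^ 2 + b ^ 2)).
      destruct (Rle_dec 0 q) as [Hq|Hq].
      rewrite Rabs_pos_eq by lra. generalize (pow2_ge_0 (a - b)) (pow2_ge_0 (a + b)); nra.
      rewrite Rabs_left by lra. generalize (pow2_ge_0 (a - b)) (pow2_ge_0 (a + b)); nra.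
      apply Rmult_le_compat_r. generalize (pow2_ge_0 a) (pow2_ge_0 b); lra. exact Hp. }
    cbv beta. fold a b q g. nra.
Qed.

Lemma dmult (f g : R -> R) x df dg : is_derive f x df -> is_derive g x dg ->
  is_derive (fun y => f y * g y) x (df * g x + f x * dg).
Proof. intros. apply (is_derive_mult f g); auto. intros; apply Rmult_comm. Qed.
Lemma dminus (f g : R -> R) x df dg : is_derive f x df -> is_derive g x dg ->
  is_derive (fun y => f y - g y) x (df - dg).
Proof. intros. apply (is_derive_minus f g); auto. Qed.

Lemma dscalr (f : R -> R) c x df : is_derive f x df -> is_derive (fun y => f y * c) x (df * c).
Proof.
  intros H. replace (df * c) with (df * c + f x * 0) by ring.
  apply (dmult f (fun _ => c)). exact H. apply is_derive_Reals, derivable_pt_lim_const.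
Qed.

Lemma wronskian_const (h : R) (W : R -> R) :
  0 < h -> cont_in h W -> (forall y, 0 < y < h -> is_derive W y 0) -> W h = W 0.
Proof.
  intros Hh Hc Hd.
  set (Wc := fun y => W (clamp h y)).
  destruct (MVT_gen Wc 0 h (fun _ => 0)) as [z [_ Hz]].
  - intros x Hx. rewrite Rmin_left, Rmax_right in Hx by lra.
    apply (is_derive_ext_loc W). 2: apply Hd; exact Hx.
    assert (Hm : 0 < Rmin x (h - x)) by (apply Rmin_pos; lra).
    exists (mkposreal _ Hm). intros y Hy. unfold Wc. rewrite clamp_id. reflexivity.
    unfold ball in Hy; simpl in Hy; unfold AbsRing_ball, abs, minus, plus, opp in Hy; simpl in Hy.
    destruct (Rabs_def2 _ _ Hy). generalize (Rmin_l x (h - x)) (Rmin_r x (h - x)). lra.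
  - intros x _. apply continuity_pt_filterlim. apply cont_in_clamp. lra. exact Hc.
  - unfold Wc in Hz. rewrite !clamp_id in Hz by lra. lra.
Qed.

Lemma gamma_value (q qt : R -> R) (h tau : R) (U V : R -> R) g g1 g2 :
  0 < h -> (forall y, 0 <= y <= h -> qt y = q y) ->
  (forall x, is_derive U x (V x)) -> (forall x, is_derive V x ((tau ^ 2 - qt x) * U x)) ->
  U 0 = 0 -> V 0 = 1 ->
  gamma_solution q h tau g g1 g2 -> g1 h * U h = V h.
Proof.
  intros Hh Hq HU HV U0 V0 [Htd [Hode [Hg0 Hgh]]].
  set (W := fun y => g1 y * U y - V y * g y).
  assert (HW : W h = W 0).
  { apply wronskian_const. exact Hh.
    - unfold W. apply (cont_in_plus h (fun y => g1 y * U y) (fun y => - (V y * g y))).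
      apply cont_in_mult. apply (cont_in_derive_on h g1 g2). intros; apply Htd; auto.
      apply cont_in_global. intros; eapply dcont; apply HU.
      apply cont_in_opp. apply cont_in_mult.
      apply cont_in_global. intros; eapply dcont; apply HV.
      apply (cont_in_derive_on h g g1). intros; apply Htd; auto.
    - intros y Hy.
      assert (Dg : is_derive g y (g1 y)) by (apply (derive_on_interior 0 h); [exact Hy| apply Htd; lra]).
      assert (Dg1 : is_derive g1 y (g2 y)) by (apply (derive_on_interior 0 h); [exact Hy| apply Htd; lra]).
      unfold W. eapply is_derive_ext. intros; reflexivity.
      replace 0 with (g2 y * U y + g1 y * V y - ((tau ^ 2 - qt y) * U y * g y + V y * g1 y)).
      apply dminus; apply dmult; auto.
      specialize (Hode y Hy). rewrite Hq by lra. nra. }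
  unfold W in HW. rewrite U0, V0, Hg0, Hgh in HW. lra.
Qed.

Lemma gamma_deriv_value (q qt : R -> R) (h tau : R) (U V : R -> R) :
  0 < h -> (forall y, 0 <= y <= h -> qt y = q y) ->
  (forall x, is_derive U x (V x)) -> (forall x, is_derive V x ((tau ^ 2 - qt x) * U x)) ->
  U 0 = 0 -> V 0 = 1 -> U h <> 0 ->
  gamma_deriv_h q h tau = V h / U h.
Proof.
  intros Hh Hq HU HV U0 V0 Uh.
  unfold gamma_deriv_h.
  match goal with |- epsilon ?i ?P = _ => assert (HP : exists d, P d) end.
  { exists (V h / U h).
    exists (fun y => U y / U h), (fun y => V y / U h), (fun y => (tau ^ 2 - qt y) * U y / U h).
    split; [|reflexivity].
    split; [|split; [|split]].
    - intros y _. split; apply derive_to_on.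
      + unfold Rdiv. apply dscalr. apply HU.
      + unfold Rdiv. replace ((tau ^ 2 - qt y) * U y * / U h) with (((tau ^ 2 - qt y) * U y) * / U h) by ring. apply dscalr. apply HV.
    - intros y Hy. rewrite Hq by lra. field. exact Uh.
    - rewrite U0. unfold Rdiv; ring.
    - field. exact Uh. }
  destruct (epsilon_spec (inhabits 0) _ HP) as [g [g1 [g2 [Hs E]]]].
  rewrite <- E. assert (Hw := gamma_value q qt h tau U V g g1 g2 Hh Hq HU HV U0 V0 Hs).
  field_simplify_eq. lra. exact Uh.
Qed.

Lemma lim_of_lip (f : R -> R) (t0 L C : R) :
  (exists d, 0 < d /\ forall t, Rabs (t - t0) < d -> Rabs (f t - L) <= C * Rabs (t - t0)) ->
  is_lim f t0 L.
Proof.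
  intros [d [Hd H]]. apply is_lim_spec. intros eps.
  assert (HC : 0 < Rabs C + 1) by (generalize (Rabs_pos C); lra).
  assert (Hm : 0 < Rmin d (eps / (Rabs C + 1))).
  { apply Rmin_pos. lra. apply Rdiv_lt_0_compat. apply cond_pos. lra. }
  exists (mkposreal _ Hm). intros y Hy _.
  unfold ball in Hy; simpl in Hy; unfold AbsRing_ball, abs, minus, plus, opp in Hy; simpl in Hy.
  assert (E1 := Rmin_l d (eps / (Rabs C + 1))).
  assert (E2 := Rmin_r d (eps / (Rabs C + 1))).
  eapply Rle_lt_trans. apply H. unfold Rminus. lra.
  assert (0 <= Rabs (y - t0)) by apply Rabs_pos.
  assert (C <= Rabs C) by apply RRle_abs.
  apply Rle_lt_trans with ((Rabs C + 1) * Rabs (y + - t0)).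
  unfold Rminus in *. nra.
  apply Rlt_le_trans with ((Rabs C + 1) * (eps / (Rabs C + 1))).
  apply Rmult_lt_compat_l. lra. lra.
  right. field. lra.
Qed.

Lemma deriv_of_lim (f g : R -> R) (t0 D : R) :
  (exists d, 0 < d /\ forall t, t <> t0 -> Rabs (t - t0) < d -> (f t - f t0) / (t - t0) = g t) ->
  is_lim g t0 D -> is_derive f t0 D.
Proof.
  intros [d [Hd He]] Hl. apply is_lim_spec in Hl.
  apply is_derive_Reals. intros eps Heps.
  destruct (Hl (mkposreal eps Heps)) as [e He2].
  assert (Hm : 0 < Rmin d e) by (apply Rmin_pos; [lra| apply cond_pos]).
  exists (mkposreal _ Hm). intros hh Hh0 Hh. simpl in Hh.
  assert (E1 := Rmin_l d e). assert (E2 := Rmin_r d e).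
  replace ((f (t0 + hh) - f t0) / hh) with (g (t0 + hh)).
  apply He2. unfold ball; simpl; unfold AbsRing_ball, abs, minus, plus, opp; simpl.
  replace (t0 + hh + - t0) with hh by ring. lra.
  intro E. apply Hh0. lra.
  rewrite <- (He (t0 + hh)). replace (t0 + hh - t0) with hh by ring. reflexivity.
  intro E. apply Hh0. lra.
  replace (t0 + hh - t0) with hh by ring. lra.
Qed.

Lemma abs_of_sq (a b c : R) : 0 <= c -> a ^ 2 <= b ^ 2 * c -> Rabs a <= Rabs b * sqrt c.
Proof.
  intros Hc H. rewrite <- !sqrt_Rsqr_abs. rewrite <- sqrt_mult_alt by apply Rle_0_sqr.
  apply sqrt_le_1_alt. unfold Rsqr. simpl in H. lra.
Qed.

Lemma exp_mono x y : x <= y -> exp x <= exp y.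
Proof. intros [H|H]. left; apply exp_increasing; exact H. rewrite H; lra. Qed.

Lemma core (q qt : R -> R) (h Q t0 : R) :
  0 < h -> 0 < t0 -> (forall y, 0 <= y <= h -> qt y = q y) ->
  (forall x, continuous qt x) -> (forall x, Rabs (qt x) <= Q) ->
  ~ dirichlet_eigenvalue q h (- t0 ^ 2) ->
  exists D, 0 < D /\ is_derive (fun t => gamma_deriv_h q h t) t0 D.
Proof.
  intros Hh Ht0 Hq Hqc HQ Hne.
  assert (HQ0 : 0 <= Q) by (generalize (HQ 0) (Rabs_pos (qt 0)); lra).
  assert (Hex : forall l : R, exists UV : (R -> R) * (R -> R),
     (forall x, is_derive (fst UV) x (snd UV x)) /\
     (forall x, is_derive (snd UV) x ((l - qt x) * fst UV x)) /\
     fst UV 0 = 0 /\ snd UV 0 = 1).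
  { intros l. destruct (ode_exists (fun s => l - qt s) (Rabs l + Q)) as [U [V [H1 [H2 [H3 H4]]]]].
    - intros x. apply (continuous_minus (V := R_NormedModule) (fun _ => l) qt). apply continuous_const. apply Hqc.
    - generalize (Rabs_pos l); lra.
    - intros x. unfold Rminus. eapply Rle_trans. apply Rabs_triang. rewrite Rabs_Ropp.
      generalize (HQ x); lra.
    - exists (U, V). simpl. auto. }
  set (S := fun l => proj1_sig (constructive_indefinite_description _ (Hex l))).
  set (Uf := fun l => fst (S l)). set (Vf := fun l => snd (S l)).
  assert (HS : forall l, (forall x, is_derive (Uf l) x (Vf l x)) /\
     (forall x, is_derive (Vf l) x ((l - qt x) * Uf l x)) /\ Uf l 0 = 0 /\ Vf l 0 = 1).
  { intros l. unfold Uf, Vf, S. destruct (constructive_indefinite_description _ (Hex l)) as [UV HUV]. exact HUV. }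
  clearbody Uf Vf. clear S Hex.
  set (l0 := t0 ^ 2).
  set (U0 := Uf l0). set (V0 := Vf l0).
  destruct (HS l0) as [HU0 [HV0 [U00 V00]]]. fold U0 V0 in HU0, HV0, U00, V00.
  assert (Hpos : exists d, 0 < d /\ forall y, 0 < y < d -> 0 < U0 y).
  { assert (H := HU0 0). apply is_derive_Reals in H. rewrite V00 in H.
    destruct (H (1/2)) as [d Hd]. lra.
    exists d. split. apply cond_pos. intros y Hy. specialize (Hd y).
    rewrite Rplus_0_l, U00, Rminus_0_r in Hd.
    assert (Hy0 : y <> 0) by lra.
    assert (Hyd : Rabs y < d) by (rewrite Rabs_pos_eq; lra).
    specialize (Hd Hy0 Hyd). destruct (Rabs_def2 _ _ Hd) as [_ Hd2].
    assert (0 < U0 y / y) by lra.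
    replace (U0 y) with (U0 y / y * y) by (field; lra). nra. }
  destruct Hpos as [dp [Hdp Hpos]].
  set (y1 := Rmin (dp / 2) (h / 2)).
  assert (Hy1 : 0 < y1 < h /\ 0 < U0 y1).
  { unfold y1. assert (E1 := Rmin_l (dp/2) (h/2)). assert (E2 := Rmin_r (dp/2) (h/2)).
    assert (0 < Rmin (dp / 2) (h / 2)) by (apply Rmin_pos; lra).
    split. lra. apply Hpos. lra. }
  assert (HU0h : U0 h <> 0).
  { intros E. apply Hne. exists U0, V0, (fun y => (l0 - qt y) * U0 y).
    split; [|split; [|split; [|split]]].
    - intros y _. split; apply derive_to_on. apply HU0. apply HV0.
    - intros y Hy. rewrite Hq by lra. unfold l0. ring.
    - exact U00.
    - exact E.
    - exists y1. split. lra. lra. }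
  set (K1 := exp ((3 + Rabs l0 + Q) * h)).
  assert (HK1 : 0 < K1) by apply exp_pos.
  assert (HB : forall l y, Rabs (l - l0) <= 1 -> 0 <= y <= h -> Uf l y ^ 2 <= K1).
  { intros l y Hl Hy. destruct (HS l) as [HU [HV [HU0' HV0']]].
    assert (Hl' : Rabs l <= Rabs l0 + 1).
    { replace l with ((l - l0) + l0) by ring. eapply Rle_trans. apply Rabs_triang. lra. }
    assert (E := energy (Uf l) (Vf l) (fun s => l - qt s) (fun _ => 0) (Rabs l + Q) 0 y).
    assert (Hr : Uf l y ^ 2 + Vf l y ^ 2 <= (Uf l 0 ^ 2 + Vf l 0 ^ 2 + 0 * y) * exp ((2 + (Rabs l + Q)) * y)).
    { apply E.
      - generalize (Rabs_pos l); lra.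
      - lra.
      - lra.
      - intros; apply HU.
      - intros t _. cbv beta. rewrite Rplus_0_r. apply HV.
      - intros t _. unfold Rminus. eapply Rle_trans. apply Rabs_triang. rewrite Rabs_Ropp.
        generalize (HQ t); lra.
      - intros; simpl; lra. }
    rewrite HU0', HV0' in Hr.
    assert (Hexp : exp ((2 + (Rabs l + Q)) * y) <= K1).
    { apply exp_mono. generalize (Rabs_pos l); nra. }
    generalize (pow2_ge_0 (Vf l y)). nra. }
  assert (HBh : forall y, 0 <= y <= h -> Rabs (U0 y) <= sqrt K1).
  { intros y Hy. replace (sqrt K1) with (Rabs 1 * sqrt K1) by (rewrite Rabs_R1; ring).
    apply abs_of_sq. lra. rewrite pow1, Rmult_1_l. apply HB. unfold Rminus. rewrite Rplus_opp_r, Rabs_R0. lra. exact Hy. }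
  set (K2 := K1 * h * exp ((2 + (Rabs l0 + Q)) * h)).
  assert (HK2 : 0 <= K2) by (unfold K2; generalize (exp_pos ((2 + (Rabs l0 + Q)) * h)); intros; repeat apply Rmult_le_pos; lra).
  assert (HD : forall l y, Rabs (l - l0) <= 1 -> 0 <= y <= h -> Rabs (Uf l y - U0 y) <= Rabs (l - l0) * sqrt K2).
  { intros l y Hl Hy. destruct (HS l) as [HU [HV [HU0' HV0']]].
    apply abs_of_sq. exact HK2.
    assert (E := energy (fun s => Uf l s - U0 s) (fun s => Vf l s - V0 s) (fun s => l0 - qt s)
                   (fun s => (l - l0) * Uf l s) (Rabs l0 + Q) ((l - l0) ^ 2 * K1) y).
    assert (Hr : (Uf l y - U0 y) ^ 2 + (Vf l y - V0 y) ^ 2 <=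
                 ((Uf l 0 - U0 0) ^ 2 + (Vf l 0 - V0 0) ^ 2 + (l - l0) ^ 2 * K1 * y) * exp ((2 + (Rabs l0 + Q)) * y)).
    { apply E.
      - generalize (Rabs_pos l0); lra.
      - generalize (pow2_ge_0 (l - l0)); nra.
      - lra.
      - intros t _. apply dminus. apply HU. apply HU0.
      - intros t _. cbv beta.
        replace ((l0 - qt t) * (Uf l t - U0 t) + (l - l0) * Uf l t) with
          ((l - qt t) * Uf l t - (l0 - qt t) * U0 t) by ring.
        apply dminus. apply HV. apply HV0.
      - intros t _. unfold Rminus. eapply Rle_trans. apply Rabs_triang. rewrite Rabs_Ropp.
        generalize (HQ t); lra.
      - intros t Ht. cbv beta. rewrite Rpow_mult_distr. apply Rmult_le_compat_l.
        apply pow2_ge_0. apply HB. exact Hl. lra. }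
    rewrite HU0', HV0', U00, V00 in Hr.
    assert (Hexp : exp ((2 + (Rabs l0 + Q)) * y) <= exp ((2 + (Rabs l0 + Q)) * h)).
    { apply exp_mono. generalize (Rabs_pos l0); nra. }
    assert (Hp1 : 0 <= (l - l0) ^ 2 * K1) by (generalize (pow2_ge_0 (l - l0)); nra).
    assert (Hp2 : (l - l0) ^ 2 * K1 * y * exp ((2 + (Rabs l0 + Q)) * y) <= (l - l0) ^ 2 * K2).
    { unfold K2. replace ((l - l0) ^ 2 * (K1 * h * exp ((2 + (Rabs l0 + Q)) * h))) with
        ((l - l0) ^ 2 * K1 * h * exp ((2 + (Rabs l0 + Q)) * h)) by ring.
      apply Rmult_le_compat. nra. generalize (exp_pos ((2 + (Rabs l0 + Q)) * y)); lra.
      apply Rmult_le_compat_l; lra. exact Hexp. }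
    generalize (pow2_ge_0 (Vf l y - V0 y)). replace (0 - 0) with 0 in Hr by ring.
    replace (1 - 1) with 0 in Hr by ring. nra. }
  (* Wronskian identity *)
  assert (HW : forall l, Vf l h * U0 h - V0 h * Uf l h = (l - l0) * RInt (fun y => Uf l y * U0 y) 0 h).
  { intros l. destruct (HS l) as [HU [HV [HU0' HV0']]].
    assert (Hc : forall z, continuous (fun y => Uf l y * U0 y) z).
    { intros z. apply cmult; eapply dcont. apply HU. apply HU0. }
    assert (E1 := is_RInt_derive (fun y => Vf l y * U0 y - V0 y * Uf l y) (fun y => (l - l0) * (Uf l y * U0 y)) 0 h).
    assert (E2 := is_RInt_scal (V := R_NormedModule) _ 0 h (l - l0) _ (RInt_correct _ 0 h (exR _ 0 h Hc))).
    assert (E3 := is_RInt_unique _ _ _ _ E2).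
    assert (E4 : RInt (fun y => (l - l0) * (Uf l y * U0 y)) 0 h = (l - l0) * RInt (fun y => Uf l y * U0 y) 0 h) by exact E3.
    assert (E5 : forall x : R, Rmin 0 h <= x <= Rmax 0 h -> is_derive (fun y => Vf l y * U0 y - V0 y * Uf l y) x ((l - l0) * (Uf l x * U0 x))).
    { intros x _. replace ((l - l0) * (Uf l x * U0 x)) with
        ((l - qt x) * Uf l x * U0 x + Vf l x * V0 x - ((l0 - qt x) * U0 x * Uf l x + V0 x * Vf l x)) by ring.
      apply dminus; apply dmult. apply HV. apply HU0. apply HV0. apply HU. }
    assert (E6 : forall x : R, Rmin 0 h <= x <= Rmax 0 h -> continuous (fun y => (l - l0) * (Uf l y * U0 y)) x).
    { intros x _. apply cmult. apply continuous_const. apply Hc. }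
    rewrite (is_RInt_unique _ _ _ _ (E1 E5 E6)) in E4.
    rewrite <- E4. change (minus ?a ?b) with (a - b). rewrite HU0', HV0', U00. ring. }
  set (J := RInt (fun y => U0 y * U0 y) 0 h).
  assert (HcU : forall z, continuous (fun y => U0 y * U0 y) z).
  { intros z. apply cmult; eapply dcont; apply HU0. }
  assert (HJ : 0 < J).
  { set (c := Rmin (dp / 2) h).
    assert (Ec1 := Rmin_l (dp / 2) h). assert (Ec2 := Rmin_r (dp / 2) h).
    assert (Hc0 : 0 < c) by (apply Rmin_pos; lra).
    unfold J. rewrite <- (RInt_Chasles (V := R_CompleteNormedModule) _ 0 c h) by (apply exR; exact HcU).
    change (plus ?a ?b) with (a + b).
    assert (0 < RInt (fun y => U0 y * U0 y) 0 c).
    { apply RInt_gt_0. exact Hc0. intros x Hx. assert (0 < U0 x) by (apply Hpos; assert (c <= dp / 2) by (unfold c; apply Rmin_l); lra). nra.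
      intros; apply HcU. }
    assert (0 <= RInt (fun y => U0 y * U0 y) c h).
    { apply RInt_ge_0. exact Ec2. apply exR; exact HcU. intros x _. apply Rle_0_sqr. }
    lra. }
  set (d1 := Rmin 1 (1 / (2 * t0 + 1))).
  assert (Hd1 : 0 < d1) by (apply Rmin_pos; [lra| apply Rdiv_lt_0_compat; lra]).
  assert (Hsq : forall t, Rabs (t - t0) < d1 -> Rabs (t ^ 2 - l0) <= (2 * t0 + 1) * Rabs (t - t0) /\ Rabs (t ^ 2 - l0) <= 1).
  { intros t Ht. assert (E1 := Rmin_l 1 (1 / (2 * t0 + 1))). assert (E2 := Rmin_r 1 (1 / (2 * t0 + 1))).
    fold d1 in E1, E2.
    replace (t ^ 2 - l0) with ((t - t0) * (t + t0)) by (unfold l0; ring).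
    rewrite Rabs_mult.
    assert (Hp : Rabs (t + t0) <= 2 * t0 + 1).
    { replace (t + t0) with ((t - t0) + 2 * t0) by ring. eapply Rle_trans. apply Rabs_triang.
      rewrite (Rabs_pos_eq (2 * t0)) by lra. lra. }
    assert (0 <= Rabs (t - t0)) by apply Rabs_pos.
    split. rewrite Rmult_comm. apply Rmult_le_compat_r; lra.
    apply Rle_trans with (Rabs (t - t0) * (2 * t0 + 1)). apply Rmult_le_compat_l; lra.
    apply Rle_trans with (1 / (2 * t0 + 1) * (2 * t0 + 1)). apply Rmult_le_compat_r; lra.
    right. field. lra. }
  assert (HA : forall t, Rabs (t - t0) < d1 -> Rabs (Uf (t ^ 2) h - U0 h) <= ((2 * t0 + 1) * sqrt K2) * Rabs (t - t0)).
  { intros t Ht. destruct (Hsq t Ht) as [H1 H2].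
    eapply Rle_trans. apply HD. exact H2. lra.
    assert (0 <= sqrt K2) by apply sqrt_pos. nra. }
  assert (HI : forall t, Rabs (t - t0) < d1 ->
     Rabs (RInt (fun y => Uf (t ^ 2) y * U0 y) 0 h - J) <= (h * ((2 * t0 + 1) * sqrt K2 * sqrt K1)) * Rabs (t - t0)).
  { intros t Ht. destruct (Hsq t Ht) as [H1 H2].
    assert (HcT : forall z, continuous (fun y => Uf (t ^ 2) y * U0 y) z).
    { intros z. destruct (HS (t ^ 2)) as [HU _]. apply cmult; eapply dcont. apply HU. apply HU0. }
    assert (Em : RInt (fun y => Uf (t ^ 2) y * U0 y) 0 h - J = RInt (fun y => Uf (t ^ 2) y * U0 y - U0 y * U0 y) 0 h).
    { unfold J. symmetry. apply (RInt_minus (V := R_CompleteNormedModule)); apply exR; assumption. }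
    rewrite Em.
    eapply Rle_trans. apply abs_RInt_le_const with (M := Rabs (t ^ 2 - l0) * sqrt K2 * sqrt K1). lra.
    apply exR. intros z. apply (continuous_minus (V := R_NormedModule)); auto.
    intros y Hy. replace (Uf (t ^ 2) y * U0 y - U0 y * U0 y) with ((Uf (t ^ 2) y - U0 y) * U0 y) by ring.
    rewrite Rabs_mult. apply Rmult_le_compat. apply Rabs_pos. apply Rabs_pos.
    apply HD. exact H2. exact Hy. apply HBh. exact Hy.
    assert (0 <= sqrt K2) by apply sqrt_pos. assert (0 <= sqrt K1) by apply sqrt_pos.
    assert (0 <= sqrt K2 * sqrt K1) by (apply Rmult_le_pos; assumption).
    rewrite Rminus_0_r.
    replace (h * (Rabs (t ^ 2 - l0) * sqrt K2 * sqrt K1)) with (h * (sqrt K2 * sqrt K1) * Rabs (t ^ 2 - l0)) by ring.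
    replace (h * ((2 * t0 + 1) * sqrt K2 * sqrt K1) * Rabs (t - t0)) with (h * (sqrt K2 * sqrt K1) * ((2 * t0 + 1) * Rabs (t - t0))) by ring.
    apply Rmult_le_compat_l. apply Rmult_le_pos; lra. exact H1. }
  set (Un := fun t => Uf (t ^ 2) h).
  set (It := fun t => RInt (fun y => Uf (t ^ 2) y * U0 y) 0 h).
  assert (LA : is_lim Un t0 (U0 h)).
  { apply lim_of_lip with ((2 * t0 + 1) * sqrt K2). exists d1. split. exact Hd1. exact HA. }
  assert (LI : is_lim It t0 J).
  { apply lim_of_lip with (h * ((2 * t0 + 1) * sqrt K2 * sqrt K1)). exists d1. split. exact Hd1. exact HI. }
  set (D := (t0 + t0) * J / (U0 h * U0 h)).
  assert (HD0 : 0 < D).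
  { unfold D. apply Rdiv_lt_0_compat. nra. assert (0 < U0 h * U0 h) by (apply Rsqr_pos_lt; exact HU0h). exact H. }
  exists D. split. exact HD0.
  apply deriv_of_lim with (g := fun t => ((t + t0) * It t) / (Un t * U0 h)).
  - set (C := (2 * t0 + 1) * sqrt K2).
    assert (HC : 0 <= C) by (unfold C; apply Rmult_le_pos; [lra| apply sqrt_pos]).
    assert (Hu : 0 < Rabs (U0 h)) by (apply Rabs_pos_lt; exact HU0h).
    set (d2 := Rmin d1 (Rabs (U0 h) / (2 * (C + 1)))).
    assert (Hd2 : 0 < d2) by (apply Rmin_pos; [lra| apply Rdiv_lt_0_compat; lra]).
    exists d2. split. exact Hd2. intros t Htt Ht.
    assert (E1 := Rmin_l d1 (Rabs (U0 h) / (2 * (C + 1)))).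
    assert (E2 := Rmin_r d1 (Rabs (U0 h) / (2 * (C + 1)))).
    fold d2 in E1, E2.
    assert (Hun : Un t <> 0).
    { intros E. assert (HA' := HA t ltac:(lra)). fold C in HA'. unfold Un in E. rewrite E in HA'.
      rewrite Rminus_0_l, Rabs_Ropp in HA'.
      assert (C * Rabs (t - t0) <= (C + 1) * (Rabs (U0 h) / (2 * (C + 1)))).
      { apply Rmult_le_compat. lra. apply Rabs_pos. lra. lra. }
      assert ((C + 1) * (Rabs (U0 h) / (2 * (C + 1))) = Rabs (U0 h) / 2) by (field; lra).
      lra. }
    destruct (HS (t ^ 2)) as [HU [HV [HU0' HV0']]].
    rewrite (gamma_deriv_value q qt h t (Uf (t ^ 2)) (Vf (t ^ 2)) Hh Hq HU HV HU0' HV0' Hun).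
    rewrite (gamma_deriv_value q qt h t0 U0 V0 Hh Hq HU0 HV0 U00 V00 HU0h).
    assert (HWt := HW (t ^ 2)). fold It in HWt.
    assert (Htt0 : t - t0 <> 0) by lra.
    unfold Un in *.
    replace (t ^ 2 - l0) with ((t - t0) * (t + t0)) in HWt by (unfold l0; ring).
    field_simplify_eq; [| repeat split; assumption].
    replace (t ^ 2 * It t - t0 ^ 2 * It t) with ((t - t0) * (t + t0) * It t) by ring.
    unfold It. rewrite <- HWt. ring.
  - unfold D.
    apply (is_lim_div (fun t => (t + t0) * It t) (fun t => Un t * U0 h) t0 ((t0 + t0) * J) (U0 h * U0 h)).
    + apply (is_lim_mult (fun t => t + t0) It t0 (t0 + t0) J).
      apply (is_lim_plus (fun t => t) (fun _ => t0) t0 t0 t0 (t0 + t0)).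
      apply is_lim_id. apply is_lim_const. simpl. reflexivity.
      exact LI. simpl. exact I.
    + apply (is_lim_mult Un (fun _ => U0 h) t0 (U0 h) (U0 h)). exact LA. apply is_lim_const. simpl. exact I.
    + intros E. injection E. intros E'. apply HU0h. apply Rmult_integral in E'. tauto.
    + simpl. exact I.
Qed.

Lemma sigma_deriv (F : R -> R) k c x D : is_derive F x D ->
  is_derive (fun t => k * (F t - c)) x (k * D).
Proof.
  intros H. replace (k * D) with (0 * (F x - c) + k * (D - 0)) by ring.
  apply (dmult (fun _ => k) (fun t => F t - c)).
  apply is_derive_Reals, derivable_pt_lim_const.
  apply dminus. exact H. apply is_derive_Reals, derivable_pt_lim_const.
Qed.

Theorem mainTheorem6
  (h alpha : R) (omega Psi Psi1 Psi2 : R -> R)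
  (Hh : 0 < h) (Halpha : 0 < alpha < 1)
  (Homega : C1alpha alpha omega)
  (HPsi : twice_diff_on 0 h Psi Psi1 Psi2)
  (HPsi_ode : forall y, 0 < y < h -> Psi2 y + omega (Psi y) = 0)
  (HPsi_h : Psi h = 0)
  (Hkappa : Psi1 h <> 0) :
  let q := fun y => Derive omega (Psi y) in
  let kappa := Psi1 h in
  let rho0 := (1 + Psi1 h * Psi2 h) / (Psi1 h) ^ 2 in
  (0 < kappa ->
     forall tau, 0 < tau -> ~ dirichlet_eigenvalue q h (- tau ^ 2) ->
       exists d, is_derive (dispersion_sigma q h kappa rho0) tau d /\ 0 < d) /\
  (kappa < 0 ->
     forall tau, 0 < tau -> ~ dirichlet_eigenvalue q h (- tau ^ 2) ->
       exists d, is_derive (dispersion_sigma q h kappa rho0) tau d /\ d < 0).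
Proof.
  intros q kappa rho0.
  set (qt := fun s => q (clamp h s)).
  assert (Hq : forall y, 0 <= y <= h -> qt y = q y).
  { intros y Hy. unfold qt. rewrite clamp_id by exact Hy. reflexivity. }
  assert (Hqc : forall x, continuous qt x).
  { intros x. unfold qt, q.
    apply (continuous_comp (fun s => Psi (clamp h s)) (Derive omega)).
    apply cont_in_clamp. lra. apply (cont_in_derive_on h Psi Psi1). intros; apply HPsi; auto.
    destruct Homega as [_ [Hc _]]. apply Hc. }
  destruct (continuity_ab_maj (fun s => Rabs (qt s)) 0 h) as [Mx [HMx _]].
  lra. intros c _. apply continuity_pt_filterlim. apply (continuous_comp qt Rabs). apply Hqc. apply continuous_Rabs.
  set (Q := Rabs (qt Mx)).
  assert (HQ : forall x, Rabs (qt x) <= Q).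
  { intros x. assert (E : qt x = qt (clamp h x)).
    { unfold qt. rewrite (clamp_id h (clamp h x)). reflexivity. apply clamp_in; lra. }
    rewrite E. apply HMx. apply clamp_in; lra. }
  assert (Hcore : forall tau, 0 < tau -> ~ dirichlet_eigenvalue q h (- tau ^ 2) ->
    exists D, 0 < D /\ is_derive (dispersion_sigma q h kappa rho0) tau (kappa * D)).
  { intros tau Ht Hne. destruct (core q qt h Q tau Hh Ht Hq Hqc HQ Hne) as [D [HD HdD]].
    exists D. split. exact HD. unfold dispersion_sigma.
    apply (sigma_deriv (fun t => gamma_deriv_h q h t)). exact HdD. }
  split.
  - intros Hk tau Ht Hne. destruct (Hcore tau Ht Hne) as [D [HD HdD]].
    exists (kappa * D). split. exact HdD. nra.
  - intros Hk tau Ht Hne. destruct (Hcore tau Ht Hne) as [D [HD HdD]].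
    exists (kappa * D). split. exact HdD. nra.
Qed.
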